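(* Let $q$ be a prime power and let $\mathcal W(5,q)$ be the symplectic polar space of ${\rm PG}(5,q)$ defined by the alternating form with Gram matrix $\begin{pmatrix} 0_3 & I_3\\ -I_3 & 0_3\end{pmatrix}$, with $\Pi_1=\langle U_4,U_5,U_6\rangle$ and $\Pi_2=\langle U_1,U_2,U_3\rangle$. Let $\mathcal P_0$ be the set of points $R$ of $\mathcal W(5,q)\setminus(\Pi_1\cup\Pi_2)$ such that the unique line through $R$ meeting both $\Pi_1$ and $\Pi_2$ is a line of $\mathcal W(5,q)$. If $\ell$ is a line of $\mathcal W(5,q)$ disjoint from $\Pi_1\cup\Pi_2$, then $|\ell\cap\mathcal P_0|\in\{1,q+1\}$ if $q$ is even, and $|\ell\cap\mathcal P_0|\in\{0,1,2\}$ if $q$ is odd.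
   Context: $U_i$ is the point with $1$ in position $i$ and $0$ elsewhere. All points of ${\rm PG}(5,q)$ are points of $\mathcal W(5,q)$; a line of $\mathcal W(5,q)$ is a totally isotropic line. *)

(* Defs.v *)
(* Projective space PG(5,q) over a finite field F (|F| = q),
   subspaces represented by row spaces of matrices over F (mxalgebra). *)
From HB Require Import structures.
From mathcomp Require Import all_boot all_order all_algebra all_field.
Set Implicit Arguments. Unset Strict Implicit. Unset Printing Implicit Defensive.
Import GRing.Theory.
Local Open Scope ring_scope.

Section W5q.
Variable F : finFieldType.

(* Gram matrix [[0_3, I_3], [-I_3, 0_3]] (indices 0..5; U_i is delta_mx 0 (i-1)) *)
Definition gramJ : 'M[F]_6 :=
  \matrix_(i < 6, j < 6)
     (if (i < 3)%N && (j == i + 3 :> nat) then 1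
      else if (3 <= i)%N && (i == j + 3 :> nat) then -1 else 0).

Definition symp (u v : 'rV[F]_6) : F := (u *m gramJ *m v^T) 0 0.

Definition tot_iso (X : 'M[F]_6) : bool := X *m gramJ *m X^T == 0.

Definition U (i : 'I_6) : 'rV[F]_6 := delta_mx 0 i.

Definition Pi1 : 'M[F]_6 := (\sum_(i : 'I_6 | (3 <= i)%N) <<U i>>)%MS.
Definition Pi2 : 'M[F]_6 := (\sum_(i : 'I_6 | (i < 3)%N) <<U i>>)%MS.

(* a point of PG(5,q), canonically represented by its generated matrix *)
Definition is_point (R : 'M[F]_6) : bool := (\rank R == 1%N) && (<<R>>%MS == R).

Definition is_line (L : 'M[F]_6) : bool := \rank L == 2%N.

Definition is_W_line (L : 'M[F]_6) : bool := is_line L && tot_iso L.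

Definition meets (X Y : 'M[F]_6) : bool := (X :&: Y)%MS != 0.

Definition P0 (R : 'M[F]_6) : bool :=
  [&& is_point R, ~~ (R <= Pi1)%MS, ~~ (R <= Pi2)%MS &
   [exists L : 'M[F]_6,
      [&& is_line L, (R <= L)%MS, meets L Pi1, meets L Pi2 & tot_iso L]]].

Definition card_P0_on (l : 'M[F]_6) : nat :=
  #|[set R : 'M[F]_6 | P0 R & (R <= l)%MS]|.

End W5q.

(* Main.v *)
Require Import Defs.
From mathcomp Require Import all_boot all_order all_algebra all_field all_fingroup all_solvable.
From mathcomp Require Import ring.
Set Implicit Arguments. Unset Strict Implicit. Unset Printing Implicit Defensive.
Import GRing.Theory.
Local Open Scope ring_scope.


Lemma gramJ_block (F : finFieldType) :
  gramJ F = (block_mx 0 1%:M (-1%:M) 0 : 'M_(3 + 3)).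
Proof.
apply/matrixP => i j; rewrite -[i](@splitK 3 3) -[j](@splitK 3 3).
case: (@split 3 3 i) => i'; case: (@split 3 3 j) => j'.
- rewrite [RHS](@block_mxEul F 3 3 3 3 0 1%:M (-1%:M) 0).
  rewrite !mxE /=; case: i' => [[|[|[|i']]] Hi] //; case: j' => [[|[|[|j']]] Hj] //=.
- rewrite [RHS](@block_mxEur F 3 3 3 3 0 1%:M (-1%:M) 0).
  rewrite !mxE /=; case: i' => [[|[|[|i']]] Hi] //; case: j' => [[|[|[|j']]] Hj] //=.
- rewrite [RHS](@block_mxEdl F 3 3 3 3 0 1%:M (-1%:M) 0).
  rewrite !mxE /=; case: i' => [[|[|[|i']]] Hi] //; case: j' => [[|[|[|j']]] Hj] //=;
  by rewrite ?oppr0.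
- rewrite [RHS](@block_mxEdr F 3 3 3 3 0 1%:M (-1%:M) 0).
  rewrite !mxE /=; case: i' => [[|[|[|i']]] Hi] //; case: j' => [[|[|[|j']]] Hj] //=.
Qed.

Definition lp (F : finFieldType) (w : 'rV[F]_6) : 'rV[F]_3 := lsubmx (w : 'M_(1, 3 + 3)).
Definition rp (F : finFieldType) (w : 'rV[F]_6) : 'rV[F]_3 := rsubmx (w : 'M_(1, 3 + 3)).
Definition dot (F : finFieldType) (x y : 'rV[F]_3) : F := (x *m y^T) 0 0.

Lemma sympE (F : finFieldType) (x y : 'rV[F]_6) :
  symp x y = dot (lp x) (rp y) - dot (rp x) (lp y).
Proof.
rewrite /symp gramJ_block /dot /lp /rp.
rewrite -[x](@hsubmxK F 1 3 3) -[y](@hsubmxK F 1 3 3).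
rewrite !row_mxKl !row_mxKr.
rewrite (@mul_row_block F 1 3 3 3 3).
rewrite (@tr_row_mx F 1 3 3) (@mul_row_col F 1 3 3 1).
rewrite !mulmx0 ?mul0mx ?addr0 ?add0r ?mulmxN ?mulmx1 ?mulNmx ?mulmx1.
by rewrite !mxE addrC.
Qed.


Lemma dotC (F : finFieldType) (x y : 'rV[F]_3) : dot x y = dot y x.
Proof. by rewrite /dot !mxE; apply: eq_bigr => i _; rewrite !mxE mulrC. Qed.

Lemma dotDl (F : finFieldType) (a : F) (x y z : 'rV[F]_3) :
  dot (a *: x + y) z = a * dot x z + dot y z.
Proof. by rewrite /dot mulmxDl -scalemxAl !mxE. Qed.

Lemma dotDr (F : finFieldType) (a : F) (x y z : 'rV[F]_3) :
  dot z (a *: x + y) = a * dot z x + dot z y.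
Proof. by rewrite dotC dotDl (dotC x) (dotC y). Qed.

Lemma dotZl (F : finFieldType) (a : F) (x z : 'rV[F]_3) : dot (a *: x) z = a * dot x z.
Proof. by rewrite /dot -scalemxAl mxE. Qed.

Lemma dotZr (F : finFieldType) (a : F) (x z : 'rV[F]_3) : dot z (a *: x) = a * dot z x.
Proof. by rewrite dotC dotZl dotC. Qed.

Lemma lpD (F : finFieldType) (a : F) (x y : 'rV[F]_6) : lp (a *: x + y) = a *: lp x + lp y.
Proof. by rewrite /lp linearD linearZ. Qed.
Lemma rpD (F : finFieldType) (a : F) (x y : 'rV[F]_6) : rp (a *: x + y) = a *: rp x + rp y.
Proof. by rewrite /rp linearD linearZ. Qed.
Lemma lpZ (F : finFieldType) (a : F) (x : 'rV[F]_6) : lp (a *: x) = a *: lp x.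
Proof. by rewrite /lp linearZ. Qed.
Lemma rpZ (F : finFieldType) (a : F) (x : 'rV[F]_6) : rp (a *: x) = a *: rp x.
Proof. by rewrite /rp linearZ. Qed.
Lemma lp0 (F : finFieldType) : lp (0 : 'rV[F]_6) = 0.
Proof. by rewrite /lp linear0. Qed.
Lemma rp0 (F : finFieldType) : rp (0 : 'rV[F]_6) = 0.
Proof. by rewrite /rp linear0. Qed.

Lemma lprp_eq0 (F : finFieldType) (w : 'rV[F]_6) : lp w = 0 -> rp w = 0 -> w = 0.
Proof.
move=> hl hr; rewrite -[w](@hsubmxK F 1 3 3).
by rewrite -/(lp w) -/(rp w) hl hr; apply/matrixP=> i j; rewrite !mxE; case: split => k; rewrite mxE.
Qed.


Lemma rpU (F : finFieldType) (i : 'I_6) : (i < 3)%N -> rp (U F i) = 0.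
Proof.
move=> hi; apply/matrixP => a k; rewrite /rp /U !mxE.
case: (rshift 3 k =P i) => [hik|]; last by rewrite andbF.
by move: hi; rewrite -hik /= ltnNge leq_addr.
Qed.

Lemma lpU (F : finFieldType) (i : 'I_6) : (3 <= i)%N -> lp (U F i) = 0.
Proof.
move=> hi; apply/matrixP => a k; rewrite /lp /U !mxE.
case: (lshift 3 k =P i) => [hik|]; last by rewrite andbF.
by move: hi; rewrite -hik /= leqNgt ltn_ord.
Qed.

Lemma subPi2 (F : finFieldType) (w : 'rV[F]_6) : (w <= Pi2 F)%MS = (rp w == 0).
Proof.
apply/idP/idP.
- case/sub_sumsmxP => u_ ->.
  rewrite /rp raddf_sum /=; apply/eqP; apply: big1 => i hi.
  have : (u_ i *m <<U F i>> <= U F i)%MS by apply: submx_trans (submxMl _ _) _; rewrite genmxE.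
  case/sub_rVP => a ->; rewrite linearZ /=.
  by have := @rpU F i hi; rewrite /rp => ->; rewrite scaler0.
- move=> /eqP hr; rewrite [w]row_sum_delta; apply: summx_sub => j _.
  case: (ltnP j 3) => hj.
  + apply: scalemx_sub; apply: (sumsmx_sup j) => //; by rewrite genmxE.
  + have hk : (j - 3 < 3)%N by case: j hj => j hj /= ?; rewrite ltn_subLR.
    have -> : w 0 j = rp w 0 (Ordinal hk).
      rewrite /rp mxE; congr (w 0 _); apply: val_inj => /=; by rewrite subnKC.
    by rewrite hr mxE scale0r sub0mx.
Qed.

Lemma subPi1 (F : finFieldType) (w : 'rV[F]_6) : (w <= Pi1 F)%MS = (lp w == 0).
Proof.
apply/idP/idP.
- case/sub_sumsmxP => u_ ->.
  rewrite /lp raddf_sum /=; apply/eqP; apply: big1 => i hi.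
  have : (u_ i *m <<U F i>> <= U F i)%MS by apply: submx_trans (submxMl _ _) _; rewrite genmxE.
  case/sub_rVP => a ->; rewrite linearZ /=.
  by have := @lpU F i hi; rewrite /lp => ->; rewrite scaler0.
- move=> /eqP hr; rewrite [w]row_sum_delta; apply: summx_sub => j _.
  case: (ltnP j 3) => hj.
  + have -> : w 0 j = lp w 0 (Ordinal hj) by rewrite /lp mxE; congr (w 0 _); apply: val_inj.
    by rewrite hr mxE scale0r sub0mx.
  + apply: scalemx_sub; apply: (sumsmx_sup j) => //; by rewrite genmxE.
Qed.


Lemma tot_isoP (F : finFieldType) (L : 'M[F]_6) :
  reflect (forall x y, (x <= L)%MS -> (y <= L)%MS -> symp x y = 0) (tot_iso L).
Proof.
apply: (iffP eqP) => [h x y /submxP[a ->] /submxP[b ->] | h].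
  rewrite /symp trmx_mul !mulmxA -(mulmxA a) -(mulmxA a) h.
  by rewrite mulmx0 !mul0mx mxE.
apply/matrixP => i j; rewrite [RHS]mxE.
have := h (row i L) (row j L) (row_sub _ _) (row_sub _ _).
rewrite /symp !rowE trmx_mul trmx_delta !mulmxA -(mulmxA (delta_mx 0 i)) -(mulmxA (delta_mx 0 i)).
rewrite -rowE -colE => <-.
by rewrite [RHS]mxE [RHS]mxE.
Qed.

Lemma span2 (F : finFieldType) (x a b : 'rV[F]_6) :
  (x <= a + b)%MS -> exists2 al, true & exists be, x = al *: a + be *: b.
Proof.
case/sub_addsmxP => [[u1 u2]] /= ->; exists (u1 0 0) => //; exists (u2 0 0).
by rewrite {1}[u1]mx11_scalar {1}[u2]mx11_scalar !mul_scalar_mx.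
Qed.

Lemma Pi12_0 (F : finFieldType) (v : 'rV[F]_6) :
  (v <= Pi1 F)%MS -> (v <= Pi2 F)%MS -> v = 0.
Proof. by rewrite subPi1 subPi2 => /eqP h1 /eqP h2; apply: lprp_eq0. Qed.

Definition Qf (F : finFieldType) (w : 'rV[F]_6) := dot (lp w) (rp w).

Lemma rank2 (F : finFieldType) (y1 y2 : 'rV[F]_6) :
  (y1 <= Pi1 F)%MS -> (y2 <= Pi2 F)%MS -> y1 != 0 -> y2 != 0 ->
  \rank (y1 + y2)%MS = 2%N.
Proof.
move=> h1 h2 n1 n2; rewrite mxrank_disjoint_sum ?rank_rV ?n1 ?n2 //.
apply/eqP/rowV0P => v; rewrite sub_capmx => /andP[v1 v2].
by apply: Pi12_0; [apply: submx_trans h1 | apply: submx_trans h2].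
Qed.


Lemma dotx0 (F : finFieldType) (x : 'rV[F]_3) : dot x 0 = 0.
Proof. by rewrite /dot trmx0 mulmx0 mxE. Qed.
Lemma dot0x (F : finFieldType) (x : 'rV[F]_3) : dot 0 x = 0.
Proof. by rewrite /dot mul0mx mxE. Qed.

Lemma is_point_gen (F : finFieldType) (w : 'rV[F]_6) : w != 0 -> is_point <<w>>%MS.
Proof. by move=> nw; rewrite /is_point genmx_id eqxx genmxE rank_rV nw. Qed.

Lemma P0E (F : finFieldType) (w : 'rV[F]_6) :
  lp w != 0 -> rp w != 0 -> P0 <<w>>%MS = (Qf w == 0).
Proof.
move=> nl nr.
have nw : w != 0 by apply: contraNneq nl => ->; rewrite lp0.
rewrite /P0 is_point_gen // !genmxE subPi1 subPi2 nl nr /=.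
apply/existsP/eqP.
- case=> L /and5P[hl hwL m1 m2 ti].
  move: m1 => /rowV0Pn [y1 hy1 n1]; rewrite sub_capmx in hy1; case/andP: hy1 => y1L y1P.
  move: m2 => /rowV0Pn [y2 hy2 n2]; rewrite sub_capmx in hy2; case/andP: hy2 => y2L y2P.
  have r := rank2 y1P y2P n1 n2.
  have sub : (y1 + y2 <= L)%MS by rewrite addsmx_sub y1L y2L.
  have eq : (L <= y1 + y2)%MS.
    move: (mxrank_leqif_eq sub) => [_]; rewrite r (eqP hl) eqxx => /esym /andP[_ ->] //.
  rewrite genmxE in hwL.
  case: (span2 (submx_trans hwL eq)) => al _ [be ->].
  move: y1P y2P; rewrite subPi1 subPi2 => /eqP l1 /eqP r2.
  rewrite /Qf lpD lpZ rpD rpZ l1 r2 !scaler0 add0r addr0 dotZl dotZr.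
  have := (tot_isoP _ ti) y2 y1 y2L y1L; rewrite sympE l1 dotx0 subr0 => ->.
  by rewrite !mulr0.
- move=> hQ.
  pose pa : 'rV[F]_6 := row_mx (lp w) (0 : 'rV[F]_3).
  pose pb : 'rV[F]_6 := row_mx (0 : 'rV[F]_3) (rp w).
  have lpa : lp pa = lp w by rewrite /lp row_mxKl.
  have rpa : rp pa = 0 by rewrite /rp row_mxKr.
  have lpb : lp pb = 0 by rewrite /lp row_mxKl.
  have rpb : rp pb = rp w by rewrite /rp row_mxKr.
  have hw : w = pb + pa by rewrite /pa /pb (@add_row_mx F 1 3 3) add0r addr0 /lp /rp hsubmxK.
  have pa1 : (pa <= Pi2 F)%MS by rewrite subPi2 rpa.
  have pb1 : (pb <= Pi1 F)%MS by rewrite subPi1 lpb.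
  have npa : pa != 0 by apply: contraNneq nl => h; rewrite -lpa h lp0.
  have npb : pb != 0 by apply: contraNneq nr => h; rewrite -rpb h rp0.
  exists (pb + pa)%MS; apply/and5P; split.
  + by rewrite /is_line rank2.
  + by rewrite genmxE hw addmx_sub_adds.
  + by apply/rowV0Pn; exists pb => //; rewrite sub_capmx addsmxSl pb1.
  + by apply/rowV0Pn; exists pa => //; rewrite sub_capmx addsmxSr pa1.
  + apply/tot_isoP => x y /span2 [a _ [b ->]] /span2 [c _ [d ->]].
    rewrite sympE !lpD !lpZ !rpD !rpZ lpa rpa lpb rpb !scaler0 !add0r !addr0.
    rewrite !dotZl !dotZr (dotC (rp w)) -/(Qf w) hQ.
    by rewrite !mulr0 subrr.
Qed.


Lemma char_card (F : finFieldType) : exists2 p, prime p & (p \in [pchar F]) /\ exists k, #|F| = (p ^ k)%N.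
Proof.
have [p pr pc] := finPcharP F.
exists p => //; split => //.
have ab := fin_ring_pchar_abelem pc.
have := abelem_pgroup ab; rewrite /pgroup cardsT => /p_natP [k hk].
by exists k.
Qed.

Lemma even_char2 (F : finFieldType) : ~~ odd #|F| -> (2%:R : F) = 0.
Proof.
move=> ev; have [p pr [pc [k hk]]] := char_card F.
have d2 : (2 %| p ^ k)%N by rewrite -hk dvdn2.
rewrite Euclid_dvdX // dvdn_prime2 // in d2; case/andP: d2 => /eqP h _.
by rewrite -h in pc; apply: pcharf0 pc.
Qed.

Lemma odd_char2 (F : finFieldType) : odd #|F| -> (2%:R : F) != 0.
Proof.
move=> od; apply/eqP => h2; have [p pr [pc [k hk]]] := char_card F.
have c2 : (2 \in [pchar F])%N by apply/andP; split => //; apply/eqP.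
have := pcharf_eq pc 2; rewrite c2 => /esym; rewrite /= => /eqP e.
have g1 := finNzRing_gt1 F.
move: od g1; rewrite hk -e; case: k {hk} => [|k]; first by rewrite expn0.
by rewrite oddX.
Qed.


Lemma roots_lt (F : finFieldType) (p : {poly F}) : p != 0 -> (#|[set t | root p t]| < size p)%N.
Proof.
move=> np; rewrite cardE; apply: max_poly_roots => //; last exact: enum_uniq.
by apply/allP => x; rewrite mem_enum inE.
Qed.

Lemma quad_le2 (F : finFieldType) (a b c : F) :
  [|| a != 0, b != 0 | c != 0] -> (#|[set t : F | (a + b * t + c * t ^+ 2 == 0)%R]| <= 2)%N.
Proof.
move=> nz; pose p : {poly F} := \poly_(i < 3) (nth 0 [:: a; b; c] i).
have np : p != 0.
  apply: contraTneq nz => h.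
  have h0 : p`_0 = 0 by rewrite h coef0.
  have h1 : p`_1 = 0 by rewrite h coef0.
  have h2 : p`_2 = 0 by rewrite h coef0.
  by rewrite !coef_poly /= in h0 h1 h2; rewrite h0 h1 h2 eqxx.
have := roots_lt np; have := size_poly 3 (fun i => nth 0 [:: a; b; c] i).
rewrite -/p => hs hr.
have -> : [set t : F | (a + b * t + c * t ^+ 2 == 0)%R] = [set t | root p t].
  apply/setP => t; rewrite !inE rootE horner_poly !big_ord_recl big_ord0 /=.
  by rewrite expr0 mulr1 expr1 addr0 addrA.
by rewrite -ltnS (leq_trans hr hs).
Qed.

Lemma lin_le1 (F : finFieldType) (a b : F) :
  (a != 0) || (b != 0) -> (#|[set t : F | (a + b * t == 0)%R]| <= 1)%N.
Proof.
move=> nz; pose p : {poly F} := \poly_(i < 2) (nth 0 [:: a; b] i).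
have np : p != 0.
  apply: contraTneq nz => h.
  have h0 : p`_0 = 0 by rewrite h coef0.
  have h1 : p`_1 = 0 by rewrite h coef0.
  by rewrite !coef_poly /= in h0 h1; rewrite h0 h1 eqxx.
have := roots_lt np; have := size_poly 2 (fun i => nth 0 [:: a; b] i).
rewrite -/p => hs hr.
have -> : [set t : F | (a + b * t == 0)%R] = [set t | root p t].
  apply/setP => t; rewrite !inE rootE horner_poly !big_ord_recl big_ord0 /=.
  by rewrite expr0 mulr1 expr1 addr0.
by rewrite -ltnS (leq_trans hr hs).
Qed.

Lemma char2_sq (F : finFieldType) (a c : F) :
  (2%:R : F) = 0 -> c != 0 -> #|[set t : F | (a + c * t ^+ 2 == 0)%R]| = 1%N.
Proof.
move=> h2 nc.
have inj : injective (fun x : F => x ^+ 2).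
  move=> x y /= e; apply/eqP; rewrite -subr_eq0 -sqrf_eq0.
  have -> : (x - y) ^+ 2 = x ^+ 2 - y ^+ 2 + (2%:R : F) * (y ^+ 2 - x * y) by ring.
  by rewrite e h2 mul0r subrr addr0.
have [t0 ht0] : exists t0, t0 ^+ 2 = - a / c.
  by have /codomP [t0 ->] := injF_onto inj (- a / c); exists t0.
have -> : [set t : F | (a + c * t ^+ 2 == 0)%R] = [set t0].
  apply/setP => t; rewrite !inE.
  apply/idP/idP => [/eqP h | /eqP ->].
    apply/eqP; apply: inj; rewrite /= ht0.
    apply: (mulfI nc); rewrite [c * (_ / _)]mulrC divfK //.
    by apply/eqP; rewrite -addr_eq0 addrC h.
  by rewrite ht0 mulrC divfK // addrN.
exact: cards1.
Qed.


Lemma rk2 (F : finFieldType) (a1 a2 : 'rV[F]_3) :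
  (forall s t, s *: a1 + t *: a2 = 0 -> s = 0 /\ t = 0) ->
  \rank (col_mx a1 a2) = 2%N.
Proof.
move=> ind.
have k0 : kermx (col_mx a1 a2) = 0.
  apply/eqP/rowV0P => x /sub_kermxP hx.
  rewrite -[x]hsubmxK mul_row_col [lsubmx x]mx11_scalar [rsubmx x]mx11_scalar in hx.
  rewrite !mul_scalar_mx in hx; have [e1 e2] := ind _ _ hx.
  have z0 : (0 : F)%:M = 0 :> 'M_1 by apply/matrixP => i j; rewrite !mxE mul0rn.
  by rewrite -[x]hsubmxK [lsubmx x]mx11_scalar [rsubmx x]mx11_scalar e1 e2 z0 row_mx0.
have := mxrank_ker (col_mx a1 a2); rewrite k0 mxrank0 => /esym /eqP.
have := rank_leq_row (col_mx a1 a2).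
by rewrite subn_eq0 => h1 h2; apply/eqP; rewrite eqn_leq h1 h2.
Qed.

Lemma nondeg (F : finFieldType) (a1 a2 b1 b2 : 'rV[F]_3) :
  (forall s t, s *: a1 + t *: a2 = 0 -> s = 0 /\ t = 0) ->
  (forall s t, s *: b1 + t *: b2 = 0 -> s = 0 /\ t = 0) ->
  dot a1 b1 = 0 -> dot a1 b2 = 0 -> dot a2 b1 = 0 -> dot a2 b2 = 0 -> False.
Proof.
move=> ia ib d11 d12 d21 d22.
have ra := rk2 ia; have rb := rk2 ib.
have z : col_mx b1 b2 *m (col_mx a1 a2)^T = 0.
  rewrite tr_col_mx mul_col_row.
  rewrite [b1 *m a1^T]mx11_scalar [b1 *m a2^T]mx11_scalar [b2 *m a1^T]mx11_scalar [b2 *m a2^T]mx11_scalar.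
  have e : forall x y : 'rV[F]_3, (x *m y^T) 0 0 = dot x y by [].
  rewrite !e !(dotC b1) !(dotC b2) d11 d12 d21 d22.
  have -> : (0 : F)%:M = 0 :> 'M_1 by apply/matrixP => i j; rewrite !mxE mul0rn.
  by rewrite block_mx0.
have := mxrankS (introT sub_kermxP z); rewrite mxrank_ker mxrank_tr ra rb.
by [].
Qed.


Lemma optcard (F : finFieldType) (P : pred (option F)) :
  #|[set o | P o]| = (P None + #|[set t | P (Some t)]|)%N.
Proof.
have e : [set o | P o] = (if P None then [set None] else set0) :|: (Some @: [set t | P (Some t)]).
  apply/setP => [[t|]]; rewrite !inE.
    rewrite (mem_imset _ _ (@Some_inj _)) inE; by case: (P None); rewrite ?inE.
  case: (P None); rewrite ?inE //=; apply/esym/imsetP => [[t _]] //.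
rewrite e; case: (P None).
  rewrite cardsU1 card_imset; last exact: Some_inj.
  suff -> : (None \notin Some @: [set t | P (Some t)]) by [].
  by apply/imsetP => [[t _]].
by rewrite set0U card_imset //; exact: Some_inj.
Qed.

Lemma comb (F : finFieldType) (u v : 'rV[F]_6) x1 y1 x2 y2 :
  (x1 *: u + y1 *: v) - (x2 *: u + y2 *: v) = (x1 - x2) *: u + (y1 - y2) *: v.
Proof. by rewrite !scalerBl opprD addrACA. Qed.

Lemma scal (F : finFieldType) (u v : 'rV[F]_6) a x y :
  a *: (x *: u + y *: v) = (a * x) *: u + (a * y) *: v.
Proof. by rewrite scalerDr !scalerA. Qed.

Lemma QfZ (F : finFieldType) (a : F) (w : 'rV[F]_6) : Qf (a *: w) = a * a * Qf w.
Proof. by rewrite /Qf lpZ rpZ dotZl dotZr mulrA. Qed.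


Unset Implicit Arguments.
Close Scope ring_scope.
Theorem mainTheorem12 (F : finFieldType) (l : 'M[F]_6) :
  is_W_line l -> ~~ meets l (Pi1 F) -> ~~ meets l (Pi2 F) ->
  (~~ odd #|F| -> card_P0_on l \in [:: 1%N; #|F|.+1]) /\
  (odd #|F| -> card_P0_on l \in [:: 0%N; 1%N; 2%N]).
Proof.
Open Scope ring_scope.
case/andP => /eqP rl til m1 m2.
have d1 : forall w : 'rV[F]_6, (w <= l)%MS -> (w <= Pi1 F)%MS -> w = 0.
  move=> w wl wp; move: m1; rewrite /meets negbK => /rowV0P h; apply: h; by rewrite sub_capmx wl wp.
have d2 : forall w : 'rV[F]_6, (w <= l)%MS -> (w <= Pi2 F)%MS -> w = 0.
  move=> w wl wp; move: m2; rewrite /meets negbK => /rowV0P h; apply: h; by rewrite sub_capmx wl wp.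
have [B hB] : exists B : 'M[F]_(2, 6), (B :=: l)%MS.
  by move: (row_base l) (eq_row_base l); rewrite rl => B hB; exists B.
pose u := row 0 B; pose v := row 1 B.
have rB : \rank B = 2%N by rewrite hB.
have mulB : forall x : 'rV_2, x *m B = x 0 0 *: u + x 0 1 *: v.
  move=> x; rewrite mulmx_sum_row !big_ord_recl big_ord0 addr0.
  have e1 : lift ord0 ord0 = 1 :> 'I_2 by apply: val_inj.
  have e0 : ord0 = 0 :> 'I_2 by apply: val_inj.
  by rewrite e1 e0.
have ind : forall s t, s *: u + t *: v = 0 -> s = 0 /\ t = 0.
  move=> s t h; pose x : 'rV_2 := \row_(i < 2) (if i == 0 then s else t).
  have rf : row_free B by rewrite /row_free rB.
  have : x *m B = 0 *m B by rewrite mulB mul0mx !mxE /= h.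
  move/(row_free_inj rf) => /rowP hx; split.
    by have := hx 0; rewrite !mxE.
  by have := hx 1; rewrite !mxE.
have subl : forall w : 'rV[F]_6, (w <= l)%MS -> exists s t, w = s *: u + t *: v.
  move=> w; rewrite -hB => /submxP [x ->]; exists (x 0 0), (x 0 1); exact: mulB.
have lin : forall s t, ((s *: u + t *: v)%R <= l)%MS.
  move=> s t; rewrite -hB; apply: (addmx_sub (scalemx_sub _ (row_sub _ _)) (scalemx_sub _ (row_sub _ _))).
have nz : forall s t, (s != 0) || (t != 0) ->
    lp (s *: u + t *: v) != 0 /\ rp (s *: u + t *: v) != 0.
  move=> s t h; split; apply: contraTneq h => e.
    have [-> ->] := ind s t (d1 _ (lin s t) ltac:(by rewrite subPi1 e)).
    by rewrite eqxx.
  have [-> ->] := ind s t (d2 _ (lin s t) ltac:(by rewrite subPi2 e)).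
  by rewrite eqxx.
pose c1 (o : option F) : F := if o is Some _ then 1 else 0.
pose c2 (o : option F) : F := if o is Some t then t else 1.
pose g o := c1 o *: u + c2 o *: v.
have nzc : forall o, (c1 o != 0) || (c2 o != 0) by case=> [t|]; rewrite /= oner_neq0 ?orbT.
have eS : [set R | P0 R & (R <= l)%MS] = (fun o => <<g o>>%MS) @: [set o | Qf (g o) == 0].
  apply/setP => R; rewrite inE; apply/andP/imsetP.
  - case=> pR Rl; case/and4P: (pR) => /andP[r1 gR] _ _ _.
    have : R != 0 by apply: contraTneq r1 => ->; rewrite mxrank0.
    case/rowV0Pn => w wR nw.
    have eqwR : (w == R)%MS.
      have [_ e] := mxrank_leqif_eq wR; by rewrite -e rank_rV nw (eqP r1).
    have RE : <<w>>%MS = R by rewrite (eq_genmx (eqmxP eqwR)) (eqP gR).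
    have wl : (w <= l)%MS by apply: submx_trans wR Rl.
    have [s [t ew]] := subl w wl.
    have nst : (s != 0) || (t != 0).
      by apply: contra_neqT nw; rewrite negb_or !negbK => /andP[/eqP s0 /eqP t0]; rewrite ew s0 t0 !scale0r addr0.
    have [lw rw] := nz s t nst; rewrite -ew in lw rw.
    have Qw : Qf w = 0 by apply/eqP; rewrite -P0E // RE.
    have [o [c [nc ec]]] : exists o c, c != 0 /\ w = c *: g o.
      case: (eqVneq s 0) => [s0|s0].
        exists None, t; move: nst; rewrite s0 eqxx /= => ->; split => //.
        by rewrite /g /= scal mulr0 mulr1 ew s0.
      exists (Some (t / s)), s; split => //.
      by rewrite /g /= scal mulr1 mulrC divfK // ew.
    exists o; last by rewrite -RE ec; apply: eq_genmx; apply: eqmx_scale.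
    by rewrite inE; move: Qw; rewrite ec QfZ => /eqP; rewrite !mulf_eq0 (negbTE nc).
  - case=> o; rewrite inE => hq ->; split.
      by have [lw rw] := nz _ _ (nzc o); rewrite P0E.
    by rewrite genmxE lin.
have inj : injective (fun o => <<g o>>%MS).
  move=> o1 o2 /= e.
  have : (g o1 <= <<g o2>>)%MS by rewrite -e genmxE.
  rewrite genmxE => /sub_rVP [a ea].
  have := ind (c1 o1 - a * c1 o2) (c2 o1 - a * c2 o2).
  rewrite -comb -scal -ea subrr => /(_ erefl).
  case: o1 o2 {e ea} => [s|] [t|] /= [h1 h2].
  - by move: h1 h2; rewrite mulr1 => /eqP; rewrite subr_eq0 => /eqP <-; rewrite mul1r => /eqP; rewrite subr_eq0 => /eqP ->.
  - by move: h1; rewrite mulr0 subr0 => /eqP; rewrite oner_eq0.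
  - by move: h1 h2; rewrite mulr1 sub0r => /eqP; rewrite oppr_eq0 => /eqP ->; rewrite mul0r subr0 => /eqP; rewrite oner_eq0.
  - by [].
rewrite /card_P0_on eS card_imset // optcard.
have QN : Qf (g None) = Qf v by rewrite /g /= scale0r add0r scale1r.
pose A := Qf u; pose B' := Qf v; pose D := dot (lp u) (rp v).
have ul : (u <= l)%MS by rewrite -hB row_sub.
have vl : (v <= l)%MS by rewrite -hB row_sub.
have iso : dot (lp v) (rp u) = D.
  have := (tot_isoP _ til) u v ul vl; rewrite sympE => /eqP; rewrite subr_eq0 => /eqP e.
  by rewrite dotC -e.
have QS : forall t, Qf (g (Some t)) = A + (D *+ 2) * t + B' * t ^+ 2.
  move=> t; rewrite /g /= /Qf lpD rpD !lpZ !rpZ !dotDl !dotDr !dotZl !dotZr iso.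
  rewrite /A /B' /D /Qf; ring.
rewrite QN -/B'.
have eset : [set t | Qf (g (Some t)) == 0] = [set t : F | (A + D *+ 2 * t + B' * t ^+ 2 == 0)%R].
  by apply/setP => t; rewrite !inE QS.
rewrite eset; split.
- move=> ev; have h2 := even_char2 ev.
  have D2 : D *+ 2 = 0 by rewrite -mulr_natl h2 mul0r.
  rewrite D2; case: (eqVneq B' 0) => [B0|Bn].
  + rewrite B0 /=; case: (eqVneq A 0) => [A0|An].
    * have -> : [set t : F | (A + 0 * t + 0 * t ^+ 2 == 0)%R] = [set: F].
        by apply/setP => t; rewrite !inE A0 !mul0r !addr0 eqxx.
      by rewrite cardsT add1n !inE eqxx orbT.
    * have -> : [set t : F | (A + 0 * t + 0 * t ^+ 2 == 0)%R] = set0.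
        by apply/setP => t; rewrite !inE !mul0r !addr0 (negbTE An).
      by rewrite cards0.
  + rewrite ?(negbTE Bn) /=.
    have -> : [set t : F | (A + 0 * t + B' * t ^+ 2 == 0)%R] = [set t : F | (A + B' * t ^+ 2 == 0)%R].
      by apply/setP => t; rewrite !inE mul0r addr0.
    by rewrite char2_sq.
- move=> od; have h2 := odd_char2 od.
  have ia : forall s t, s *: lp u + t *: lp v = 0 -> s = 0 /\ t = 0.
    move=> s t h; apply: ind; apply: d1 (lin s t) _; by rewrite subPi1 lpD lpZ h.
  have ib : forall s t, s *: rp u + t *: rp v = 0 -> s = 0 /\ t = 0.
    move=> s t h; apply: ind; apply: d2 (lin s t) _; by rewrite subPi2 rpD rpZ h.
  case: (eqVneq B' 0) => [B0|Bn].
  + rewrite B0 /=.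
    have : (#|[set t : F | (A + D *+ 2 * t + 0 * t ^+ 2 == 0)%R]| <= 1)%N.
      have -> : [set t : F | (A + D *+ 2 * t + 0 * t ^+ 2 == 0)%R] = [set t : F | (A + D *+ 2 * t == 0)%R].
        by apply/setP => t; rewrite !inE mul0r addr0.
      apply: lin_le1; rewrite -negb_and; apply/negP => /andP [/eqP A0 /eqP D20].
      have D0 : D = 0.
        by move: D20; rewrite -mulr_natl => /eqP; rewrite mulf_eq0 (negbTE h2) /= => /eqP.
      apply: (nondeg ia ib) => //; by rewrite ?iso.
    by case: #|_| => [|[|n]].
  + rewrite ?(negbTE Bn) /= add0n.
    have := @quad_le2 F A (D *+ 2) B' ltac:(by rewrite Bn !orbT).
    by case: #|_| => [|[|[|n]]].
Qed.
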